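(* Consider Q-learning with on-policy learning policies as in the context with constant parameters $\alpha_k\equiv\alpha$, $\epsilon_k\equiv\epsilon$, $\tau_k\equiv\tau$, under the exploration assumption, with $\alpha<1/c_1$ where $c_1=\tfrac12\lambda^{r_b}\mu_{\pi_b,\min}\delta_b(1-\gamma)$ and $\lambda=\min_{0\le n\le k}\min_{s,a}\pi_n(a\mid s)$, $\epsilon\in(0,1]$ and $\tau\in(0,1/(1-\gamma)]$. Then for all $k\ge0$, \[ \mathbb E[\|Q^{\pi_k}-Q^*\|_\infty^2]\le\frac{12\gamma^2}{(1-\gamma)^2}\mathbb E[\|Q_k-Q^*\|_\infty^2]+\frac{12\epsilon^2}{(1-\gamma)^4}+\frac{3\tau^2\log^2(|\mathcal A|)}{(1-\gamma)^2}. \]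
   Context: MDP: finite state set $\mathcal S$, finite action set $\mathcal A$, transition kernel $p(s'\mid s,a)$, reward $\mathcal R$ with $|\mathcal R(s,a)|\le1$, discount $\gamma\in(0,1)$. For a policy $\pi$, $Q^\pi(s,a)=\mathbb E_\pi[\sum_{k\ge0}\gamma^k\mathcal R(S_k,A_k)\mid S_0=s,A_0=a]$ where $A_k\sim\pi(\cdot\mid S_k)$ for $k\ge1$. $Q^*$ is the optimal Q-function. $\|\cdot\|_\infty$ is the max norm. Algorithm: given $\alpha_k>0$, $\epsilon_k\in(0,1]$, $\tau_k>0$, initial $Q_0$ with $\|Q_0\|_\infty\le1/(1-\gamma)$ and state $S_0$, for $k=0,1,\dots$: $\pi_k(a\mid s)=\frac{\epsilon_k}{|\mathcal A|}+(1-\epsilon_k)\frac{\exp(Q_k(s,a)/\tau_k)}{\sum_{a'}\exp(Q_k(s,a')/\tau_k)}$; $A_k\sim\pi_k(\cdot\mid S_k)$, $S_{k+1}\sim p(\cdot\mid S_k,A_k)$; $Q_{k+1}(s,a)=Q_k(s,a)+\alpha_k\mathbb 1_{\{(S_k,A_k)=(s,a)\}}(\mathcal R(S_k,A_k)+\gamma\max_{a'}Q_k(S_{k+1},a')-Q_k(S_k,A_k))$. The policy $\pi_k$ is a (random) policy; $Q^{\pi_k}$ is its Q-function. Exploration assumption: there is a policy $\pi_b$ with $\pi_b(a\mid s)>0$ for all $(s,a)$ whose state chain $P_{\pi_b}(s,s')=\sum_a p(s'\mid s,a)\pi_b(a\mid s)$ is irreducible; $\mu_{\pi_b}$ its stationary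 distribution, $\mu_{\pi_b,\min}=\min_s\mu_{\pi_b}(s)$; $\mathcal P_{\pi_b}=(P_{\pi_b}+I)/2$; $r_b\in\mathbb Z_+$, $\delta_b>0$ satisfy $\min_{s,s'}\mathcal P_{\pi_b}^{r_b}(s,s')\ge\delta_b$. *)

(* Defs.v *)
From HB Require Import structures.
From mathcomp Require Import all_boot all_order all_algebra.
From mathcomp Require Import all_classical all_reals all_analysis.
Set Implicit Arguments. Unset Strict Implicit. Unset Printing Implicit Defensive.
Import Order.TTheory GRing.Theory Num.Theory.
Local Open Scope ring_scope.
Local Open Scope classical_set_scope.

Section QLearning.
Context {R : realType} {S A : finType}.

Definition is_kernel (p : S -> A -> S -> R) : Prop :=
  (forall s a s', 0 <= p s a s') /\ (forall s a, \sum_(s' : S) p s a s' = 1).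

Definition is_policy (pi : S -> A -> R) : Prop :=
  (forall s a, 0 <= pi s a) /\ (forall s, \sum_(a : A) pi s a = 1).

Definition sa_step (p : S -> A -> S -> R) (pi : S -> A -> R)
  (d : S * A -> R) : S * A -> R :=
  fun x => \sum_(y : S * A) d y * p y.1 y.2 x.1 * pi x.1 x.2.

(* law of (S_n, A_n) given S_0 = s, A_0 = a *)
Definition sa_dist (p : S -> A -> S -> R) (pi : S -> A -> R) (s : S) (a : A)
  (n : nat) : S * A -> R :=
  iter n (sa_step p pi) (fun x => if x == (s, a) then 1 else 0).

(* Q^pi(s,a) = E_pi[ sum_k gamma^k R(S_k,A_k) | S_0 = s, A_0 = a ]
   = sum_k gamma^k E_pi[R(S_k,A_k) | S_0=s, A_0=a] *)
Definition Qpi (p : S -> A -> S -> R) (rew : S -> A -> R) (gamma : R)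
  (pi : S -> A -> R) (s : S) (a : A) : R :=
  \big[+%R/0%R]_(0 <= n <oo)
     (gamma ^+ n * \sum_(x : S * A) sa_dist p pi s a n x * rew x.1 x.2).

Definition Qstar (p : S -> A -> S -> R) (rew : S -> A -> R) (gamma : R)
  (s : S) (a : A) : R :=
  sup [set Qpi p rew gamma pi s a | pi in [set pi | is_policy pi]].

Definition supnorm (Q : S -> A -> R) : R :=
  \big[Num.max/0]_(x : S * A) `|Q x.1 x.2|.

Definition Qsub (Q1 Q2 : S -> A -> R) : S -> A -> R := fun s a => Q1 s a - Q2 s a.

Definition softpol (eps tau : R) (Q : S -> A -> R) : S -> A -> R :=
  fun s a => eps / #|A|%:R
    + (1 - eps) * (expR (Q s a / tau) / \sum_(b : A) expR (Q s b / tau)).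

Definition qupdate (rew : S -> A -> R) (alpha gamma : R)
  (Q : S -> A -> R) (s : S) (a : A) (s' : S) : S -> A -> R :=
  fun x y => if (x == s) && (y == a) then
      Q x y + alpha * (rew s a + gamma * \big[Num.max/Q s' a]_(b : A) Q s' b - Q s a)
    else Q x y.

(* Running the algorithm along a history: from the current iterate Q and
   state s, the list h = [(A_j, S_{j+1}); ...] of the next actions and
   states. Returns the final iterate and the probability of the history. *)
Fixpoint run (p : S -> A -> S -> R) (rew : S -> A -> R) (alpha gamma eps tau : R)
  (Q : S -> A -> R) (s : S) (h : seq (A * S)) : (S -> A -> R) * R :=
  match h with
  | [::] => (Q, 1)
  | (a, s') :: h' =>
      let r := run p rew alpha gamma eps tau (qupdate rew alpha gamma Q s a s') s' h' in
      (r.1, softpol eps tau Q s a * p s a s' * r.2)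
  end.

(* E[ f(Q_k) ] : expectation over all histories
   (A_0,S_1,...,A_{k-1},S_k) starting from Q_0 and S_0 *)
Definition Eiter (p : S -> A -> S -> R) (rew : S -> A -> R) (alpha gamma eps tau : R)
  (Q0 : S -> A -> R) (s0 : S) (k : nat) (f : (S -> A -> R) -> R) : R :=
  \sum_(h : k.-tuple (A * S))
     (run p rew alpha gamma eps tau Q0 s0 h).2 * f (run p rew alpha gamma eps tau Q0 s0 h).1.

(* lambda = min_{0<=n<=k} min_{s,a} pi_n(a|s) along the history h
   (seed 1 is harmless since all pi_n(a|s) <= 1) *)
Definition lambda_hist (p : S -> A -> S -> R) (rew : S -> A -> R)
  (alpha gamma eps tau : R) (Q0 : S -> A -> R) (s0 : S) (k : nat)
  (h : k.-tuple (A * S)) : R :=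
  \big[Num.min/1]_(n < k.+1) \big[Num.min/1]_(x : S * A)
     softpol eps tau (run p rew alpha gamma eps tau Q0 s0 (take n h)).1 x.1 x.2.

Definition Ppi (p : S -> A -> S -> R) (pi : S -> A -> R) : S -> S -> R :=
  fun s s' => \sum_(a : A) p s a s' * pi s a.

Definition kmul (P Q : S -> S -> R) : S -> S -> R :=
  fun s s' => \sum_(u : S) P s u * Q u s'.

Definition kid : S -> S -> R := fun s s' => if s == s' then 1 else 0.

Definition kpow (P : S -> S -> R) (n : nat) : S -> S -> R := iter n (kmul P) kid.

Definition irreducible (P : S -> S -> R) : Prop :=
  forall s s', exists n, 0 < kpow P n s s'.

Definition stationary (P : S -> S -> R) (mu : S -> R) : Prop :=
  (forall s, 0 <= mu s) /\ \sum_(s : S) mu s = 1 /\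
  (forall s', \sum_(s : S) mu s * P s s' = mu s').

Definition lazyk (P : S -> S -> R) : S -> S -> R :=
  fun s s' => (P s s' + kid s s') / 2.

End QLearning.

(* Main.v *)
Require Import Defs.
From HB Require Import structures.
From mathcomp Require Import all_boot all_order all_algebra.
From mathcomp Require Import all_classical all_reals all_analysis.
From mathcomp Require Import ring lra.
Import Order.TTheory GRing.Theory Num.Theory.
Import numFieldNormedType.Exports.
Local Open Scope ring_scope.

Section Part1.
Context {R : realType} {S A : finType}.
Variables (p : S -> A -> S -> R) (pi : S -> A -> R).

Definition dlt (y : S * A) : S * A -> R := fun x => if x == y then 1 else 0.

Lemma sa_stepE d x : sa_step p pi d x = \sum_y d y * p y.1 y.2 x.1 * pi x.1 x.2.
Proof. by []. Qed.

Lemma sum_dlt (d : S * A -> R) x : \sum_y d y * dlt y x = d x.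
Proof.
rewrite (bigD1 x) //= big1 ?addr0 /dlt ?eqxx ?mulr1 // => y /negbTE yx.
by rewrite eq_sym yx mulr0.
Qed.

Lemma iter_lin n (d : S * A -> R) x :
  iter n (sa_step p pi) d x = \sum_y d y * iter n (sa_step p pi) (dlt y) x.
Proof.
elim: n x => [|n IH] x /=; first by rewrite sum_dlt.
rewrite sa_stepE.
rewrite (eq_bigr (fun z => (\sum_y d y * iter n (sa_step p pi) (dlt y) z) * p z.1 z.2 x.1 * pi x.1 x.2)); last by move=> z _; rewrite IH.
under eq_bigr => z _ do rewrite mulr_suml mulr_suml.
rewrite exchange_big /=; apply: eq_bigr => y _.
rewrite mulr_sumr; apply: eq_bigr => z _; by rewrite !mulrA.
Qed.

Lemma sa_dist_S s a n x :
  sa_dist p pi s a n.+1 x =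
  \sum_(y : S * A) (p s a y.1 * pi y.1 y.2) * sa_dist p pi y.1 y.2 n x.
Proof.
rewrite /sa_dist iterSr iter_lin; apply: eq_bigr => -[s' a'] _ /=.
congr (_ * _).
rewrite sa_stepE (bigD1 (s, a)) //= eqxx mul1r big1 ?addr0 // => y /negbTE ->.
by rewrite !mul0r.
Qed.

Lemma sa_dist_0 s a x : sa_dist p pi s a 0 x = dlt (s, a) x.
Proof. by []. Qed.

Hypothesis pk : is_kernel p.
Hypothesis ppol : is_policy pi.

Lemma sa_dist_ge0 s a n x : 0 <= sa_dist p pi s a n x.
Proof.
elim: n x => [|n IH] x; first by rewrite /sa_dist /=; case: ifP.
rewrite /sa_dist /= sa_stepE; apply: sumr_ge0 => y _.
by rewrite !mulr_ge0 //; [apply: IH|apply pk.1|apply ppol.1].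
Qed.

Lemma sa_dist_sum s a n : \sum_x sa_dist p pi s a n x = 1.
Proof.
elim: n => [|n IH].
  by rewrite /sa_dist /= (bigD1 (s,a)) //= eqxx big1 ?addr0 // => y /negbTE ->.
rewrite -[RHS]IH /sa_dist /=; under eq_bigr do rewrite sa_stepE.
rewrite exchange_big /=; apply: eq_bigr => y _.
set c := iter _ _ _ y.
rewrite -[RHS]mulr1 -[X in _ * X](pk.2 y.1 y.2) mulr_sumr.
rewrite -(pair_bigA _ (fun s' a' => c * p y.1 y.2 s' * pi s' a')) /=.
apply: eq_bigr => s' _; rewrite -[in RHS](mulr1 (p y.1 y.2 s')) -(ppol.2 s').
rewrite !mulr_sumr; apply: eq_bigr => a' _; by rewrite mulrA.
Qed.

End Part1.

Section Part2.
Context {R : realType} {S A : finType}.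
Variables (p : S -> A -> S -> R) (rew : S -> A -> R) (gamma : R) (pi : S -> A -> R).
Hypothesis pk : is_kernel p.
Hypothesis ppol : is_policy pi.
Hypothesis rew1 : forall s a, `|rew s a| <= 1.
Hypothesis g01 : 0 < gamma < 1.

Let dge0 s a n x : 0 <= sa_dist p pi s a n x := sa_dist_ge0 p pi pk ppol s a n x.
Let dsum s a n : \sum_x sa_dist p pi s a n x = 1 := sa_dist_sum p pi pk ppol s a n.

Definition uu s a n := gamma ^+ n * \sum_(x : S * A) sa_dist p pi s a n x * rew x.1 x.2.

Lemma QpiE s a : Qpi p rew gamma pi s a = limn (series (uu s a)).
Proof. by []. Qed.

Lemma uu_bound s a n : `|uu s a n| <= gamma ^+ n.
Proof.
have g0 : 0 <= gamma by case/andP: g01 => /ltW.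
rewrite /uu normrM ger0_norm ?exprn_ge0 //.
rewrite -[leRHS]mulr1 ler_wpM2l ?exprn_ge0 //.
rewrite -(dsum s a n).
apply: le_trans (ler_norm_sum _ _ _) _.
apply: ler_sum => x _; rewrite normrM ger0_norm ?dge0 //.
by rewrite -[leRHS]mulr1 ler_wpM2l ?dge0.
Qed.

Lemma uu_cvg s a : cvgn (series (uu s a)).
Proof.
have g0 : 0 <= gamma by case/andP: g01 => /ltW.
apply: normed_cvg.
apply: (@series_le_cvg _ _ (geometric 1 gamma)).
- by move=> n; exact: normr_ge0.
- by move=> n; rewrite /geometric /= mul1r exprn_ge0.
- by move=> n; rewrite /geometric /= mul1r uu_bound.
- apply: is_cvg_geometric_series; rewrite ger0_norm //; by case/andP: g01.
Qed.

Lemma uu_S s a n :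
  uu s a n.+1 = gamma * \sum_(y : S * A) (p s a y.1 * pi y.1 y.2) * uu y.1 y.2 n.
Proof.
rewrite /uu exprS -mulrA; congr (_ * _).
under eq_bigr do rewrite sa_dist_S mulr_suml.
rewrite exchange_big mulr_sumr /=; apply: eq_bigr => y _.
rewrite mulrCA; congr (_ * _); rewrite mulr_sumr.
by apply: eq_bigr => x _; rewrite !mulrA.
Qed.

Lemma uu_0 s a : uu s a 0 = rew s a.
Proof.
rewrite /uu expr0 mul1r (bigD1 (s, a)) //= big1 ?addr0.
  by rewrite /sa_dist /= eqxx mul1r.
by move=> y /negbTE yn; rewrite /sa_dist /= yn mul0r.
Qed.

Lemma series_S s a N :
  series (uu s a) N.+1 = rew s a + gamma * \sum_(y : S * A) (p s a y.1 * pi y.1 y.2) * series (uu y.1 y.2) N.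
Proof.
rewrite /series /= big_nat_recl // uu_0; congr (_ + _).
under eq_bigr do rewrite uu_S.
rewrite -mulr_sumr; congr (_ * _).
rewrite exchange_big /=; apply: eq_bigr => y _.
by rewrite mulr_sumr.
Qed.

Lemma bellman s a :
  Qpi p rew gamma pi s a = rew s a + gamma * \sum_(y : S * A) (p s a y.1 * pi y.1 y.2) * Qpi p rew gamma pi y.1 y.2.
Proof.
have H1 : (series (uu s a) N.+1 @[N --> \oo] --> Qpi p rew gamma pi s a)%classic.
  by rewrite (cvg_shiftS (series (uu s a))); exact: uu_cvg.
have H2 : (series (uu s a) N.+1 @[N --> \oo] --> rew s a + gamma * \sum_(y : S * A) (p s a y.1 * pi y.1 y.2) * Qpi p rew gamma pi y.1 y.2)%classic.
  under eq_fun do rewrite series_S.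
  apply: cvgD; first exact: cvg_cst.
  apply: cvgMl_tmp.
  apply: cvg_big => //; first exact: add_continuous.
  move=> y _; apply: cvgMl_tmp; exact: uu_cvg.
exact: (cvg_unique _ H1 H2).
Qed.

End Part2.

Section Softmax.
Context {R : realType} {A : finType}.

Lemma softmax_bound (x : A -> R) (a' : A) :
  x a' - \sum_(a : A) (expR (x a) / \sum_(b : A) expR (x b)) * x a <= ln (#|A|%:R : R).
Proof.
set Z := \sum_(b : A) expR (x b).
have Zge : expR (x a') <= Z.
  rewrite /Z (bigD1 a') //= lerDl; apply: sumr_ge0 => b _; exact: ltW (expR_gt0 _).
have Z0 : 0 < Z by apply: lt_le_trans Zge; exact: expR_gt0.
set q := fun a => expR (x a) / Z.
have q0 a : 0 < q a by rewrite /q divr_gt0 // expR_gt0.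
have qs : \sum_a q a = 1.
  by rewrite /q -mulr_suml -/Z mulfV // gt_eqF.
have n0 : (0 < #|A|)%N by apply/card_gt0P; exists a'.
have nR : 0 < (#|A|%:R : R) by rewrite ltr0n.
have lnq a : ln (q a) = x a - ln Z.
  by rewrite /q lnM ?posrE ?expR_gt0 ?invr_gt0 // lnV ?posrE // expRK.
have xe a : x a = ln (q a) + ln Z by rewrite lnq subrK.
have H1 : x a' <= ln Z by rewrite -[leLHS]expRK ler_ln ?posrE ?expR_gt0.
have H2 : \sum_a q a * (- ln (q a) - ln (#|A|%:R)) <= 0.
  apply: (@le_trans _ _ (\sum_a (#|A|%:R^-1 - q a))); last first.
    rewrite le_eqVlt; apply/orP; left; apply/eqP.
    rewrite sumrB qs sumr_const (_ : #|_| = #|A|) // -[_ *+ #|A|]mulr_natr mulVf ?gt_eqF // subrr.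
  by [].
  apply: ler_sum => a _.
  have h : ln (#|A|%:R^-1 / q a) <= #|A|%:R^-1 / q a - 1.
    have := @le_ln1Dx R (#|A|%:R^-1 / q a - 1); rewrite [1 + _]addrC subrK; apply.
    have ht : 0 < #|A|%:R^-1 / q a by rewrite divr_gt0 ?invr_gt0.
    lra.
  rewrite lnM ?posrE ?invr_gt0 // lnV ?posrE // lnV ?posrE // in h.
  have -> : #|A|%:R^-1 - q a = q a * (#|A|%:R^-1 / q a - 1).
    by rewrite mulrBr mulr1 mulrCA mulfV ?gt_eqF // mulr1.
  apply: ler_wpM2l; first exact: ltW.
  lra.
have -> : \sum_a expR (x a) / Z * x a = \sum_a q a * x a by [].
under eq_bigr do rewrite xe mulrDr.
rewrite big_split /= -mulr_suml qs mul1r.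
rewrite (eq_bigr (fun a => - (q a * ln (q a)) - q a * ln (#|A|%:R : R))) in H2; last by move=> a _; rewrite mulrBr mulrN.
rewrite sumrB sumrN -mulr_suml qs mul1r in H2.
lra.
Qed.

End Softmax.

Section Part4.
Context {R : realType} {S A : finType}.

Lemma supnorm_ge0 (Q : S -> A -> R) : 0 <= supnorm Q.
Proof.
rewrite /supnorm; apply: (big_ind (fun x => 0 <= x)) => // x y hx hy.
by rewrite le_max hx.
Qed.

Lemma le_supnorm (Q : S -> A -> R) s a : `|Q s a| <= supnorm Q.
Proof. exact: (le_bigmax _ (fun x : S * A => `|Q x.1 x.2|) (s, a)). Qed.

Lemma supnorm_le (Q : S -> A -> R) c : 0 <= c -> (forall s a, `|Q s a| <= c) -> supnorm Q <= c.
Proof. by move=> c0 H; apply: bigmax_le => // -[s a] _; apply: H. Qed.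

Variables (p : S -> A -> S -> R) (rew : S -> A -> R) (gamma : R).
Hypothesis pk : is_kernel p.
Hypothesis rew1 : forall s a, `|rew s a| <= 1.
Hypothesis g01 : 0 < gamma < 1.

Lemma pairE (pi : S -> A -> R) s a (f : S -> A -> R) :
  \sum_(y : S * A) p s a y.1 * pi y.1 y.2 * f y.1 y.2 =
  \sum_(s' : S) p s a s' * \sum_(a' : A) pi s' a' * f s' a'.
Proof.
rewrite -(pair_bigA _ (fun s' a' => p s a s' * pi s' a' * f s' a')) /=.
by apply: eq_bigr => s' _; rewrite mulr_sumr; apply: eq_bigr => a' _; rewrite mulrA.
Qed.

Lemma csum (pi : S -> A -> R) s a : is_policy pi ->
  \sum_(y : S * A) p s a y.1 * pi y.1 y.2 = 1.
Proof.
move=> pp.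
transitivity (\sum_(y : S * A) p s a y.1 * pi y.1 y.2 * (fun _ _ => 1) y.1 y.2).
  by apply: eq_bigr => y _; rewrite mulr1.
rewrite (pairE pi s a (fun _ _ => 1)) -[RHS](pk.2 s a); apply: eq_bigr => s' _.
by under eq_bigr do rewrite mulr1; rewrite pp.2 mulr1.
Qed.

Let K := 1 / (1 - gamma).
Let K0 : 0 < K.
Proof. by rewrite /K divr_gt0 // subr_gt0; case/andP: g01. Qed.
Let g0 : 0 <= gamma.
Proof. by case/andP: g01 => /ltW. Qed.

Lemma Qpi_bound (pi : S -> A -> R) : is_policy pi ->
  forall s a, `|Qpi p rew gamma pi s a| <= K.
Proof.
move=> pp.
set m := supnorm (Qpi p rew gamma pi).
suff hm : m <= K by move=> s a; apply: le_trans (le_supnorm _ s a) hm.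
have : m <= 1 + gamma * m.
  apply: supnorm_le.
    by rewrite addr_ge0 // mulr_ge0 // supnorm_ge0.
  move=> s a; rewrite (bellman p rew gamma pi pk pp rew1 g01).
  apply: le_trans (ler_normD _ _) _; apply: lerD; first exact: rew1.
  rewrite normrM ger0_norm // ler_wpM2l //.
  apply: le_trans (ler_norm_sum _ _ _) _.
  rewrite -[leRHS]mul1r -(csum pi s a pp) mulr_suml; apply: ler_sum => y _.
  rewrite normrM ger0_norm; last by rewrite mulr_ge0 //; [apply pk.1|apply pp.1].
  by rewrite ler_wpM2l ?le_supnorm // mulr_ge0 //; [apply pk.1|apply pp.1].
move=> h; rewrite /K ler_pdivlMr ?subr_gt0; last by case/andP: g01.
lra.
Qed.

Hypothesis expol : exists pi : S -> A -> R, is_policy pi.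

Let E s a := [set Qpi p rew gamma pi s a | pi in [set pi | is_policy pi]]%classic.

Lemma E_ub s a : has_ubound (E s a).
Proof.
exists K => y [pi pp <-].
exact: le_trans (ler_norm _) (Qpi_bound pi pp s a).
Qed.

Lemma E_ne s a : (E s a !=set0)%classic.
Proof. by case: expol => pi pp; exists (Qpi p rew gamma pi s a); exists pi. Qed.

Lemma Qstar_ge (pi : S -> A -> R) s a : is_policy pi ->
  Qpi p rew gamma pi s a <= Qstar p rew gamma s a.
Proof. by move=> pp; apply: (ub_le_sup (E_ub s a)); exists pi. Qed.

Lemma Qstar_le s a c : (forall pi, is_policy pi -> Qpi p rew gamma pi s a <= c) ->
  Qstar p rew gamma s a <= c.
Proof. by move=> H; apply: ge_sup; [exact: E_ne|move=> y [pi pp <-]; exact: H]. Qed.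

Lemma Qstar_bound s a : `|Qstar p rew gamma s a| <= K.
Proof.
rewrite ler_norml; apply/andP; split.
  case: expol => pi pp; apply: le_trans (Qstar_ge pi s a pp).
  by have := Qpi_bound pi pp s a; rewrite ler_norml => /andP[].
apply: Qstar_le => pi pp.
by have := Qpi_bound pi pp s a; rewrite ler_norml => /andP[].
Qed.


Variables (eps tau : R) (Q : S -> A -> R).
Hypothesis eps01 : 0 < eps <= 1.
Hypothesis tau0 : 0 < tau.
Hypothesis nA : (0 < #|A|)%N.

Let pi := softpol eps tau Q.
Let sm s a := expR (Q s a / tau) / \sum_(b : A) expR (Q s b / tau).
Let nR : 0 < (#|A|%:R : R).
Proof. by rewrite ltr0n. Qed.

Let Zpos s : 0 < \sum_(b : A) expR (Q s b / tau).
Proof.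
case/card_gt0P: nA => b _.
rewrite (bigD1 b) //= ltr_pwDl ?expR_gt0 //; apply: sumr_ge0 => c _; exact: ltW (expR_gt0 _).
Qed.

Let sm_ge0 s a : 0 <= sm s a.
Proof. by rewrite /sm divr_ge0 // ltW ?expR_gt0 ?Zpos. Qed.

Let sm_sum s : \sum_a sm s a = 1.
Proof. by rewrite /sm -mulr_suml mulfV // gt_eqF ?Zpos. Qed.

Let piE s a : pi s a = eps / #|A|%:R + (1 - eps) * sm s a.
Proof. by []. Qed.

Lemma soft_pol : is_policy pi.
Proof.
have [e0 e1] : 0 < eps /\ eps <= 1 by case/andP: eps01.
split.
  move=> s a; rewrite piE addr_ge0 //; first by rewrite divr_ge0 ?ltW.
  by rewrite mulr_ge0 // subr_ge0.
move=> s; under eq_bigr do rewrite piE.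
rewrite big_split /= -!mulr_sumr sm_sum mulr1 sumr_const.
rewrite (_ : #|_| = #|A|) // -[_^-1 *+ _]mulr_natr mulVf ?gt_eqF // mulr1.
by rewrite addrC subrK.
Qed.

Let QS := Qstar p rew gamma.
Let d := supnorm (Qsub Q QS).
Let e := supnorm (Qsub (Qpi p rew gamma pi) QS).
Let L := ln (#|A|%:R : R).
Let M := 2 * eps * K + 2 * d + tau * L.

Let L0 : 0 <= L.
Proof. by rewrite /L ln_ge0 // ler1n. Qed.

Let M0 : 0 <= M.
Proof.
have [e0 e1] : 0 < eps /\ eps <= 1 by case/andP: eps01.
have d0 : 0 <= d := supnorm_ge0 _.
rewrite /M; apply: addr_ge0; [apply: addr_ge0|]; apply: mulr_ge0 => //.
- by rewrite mulr_ge0 // ltW.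
- exact: ltW.
- exact: ltW.
Qed.

Lemma M_bound s a' : QS s a' - \sum_a pi s a * QS s a <= M.
Proof.
have [e0 e1] : 0 < eps /\ eps <= 1 by case/andP: eps01.
have hex : \sum_a pi s a * QS s a =
    eps / #|A|%:R * \sum_a QS s a + (1 - eps) * \sum_a sm s a * QS s a.
  under eq_bigr do rewrite piE mulrDl.
  rewrite big_split /= -!mulr_sumr; congr (_ + _).
  rewrite mulr_sumr; apply: eq_bigr => b _; exact: (esym (mulrA _ _ _)).
rewrite hex.
have f3 : - (eps * K) <= eps / #|A|%:R * \sum_a QS s a.
  have : \sum_(a : A) (- K) <= \sum_a QS s a.
    apply: ler_sum => a _.
    by have := Qstar_bound s a; rewrite ler_norml => /andP[].
  rewrite sumr_const (_ : #|_| = #|A|) // -[_ *+ _]mulr_natr => h.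
  have z0 : 0 <= eps / #|A|%:R by rewrite divr_ge0 ?ltW.
  apply: le_trans (ler_wpM2l z0 h).
  have nz : (#|A|%:R : R) != 0 by rewrite gt_eqF.
  by rewrite le_eqVlt; apply/orP; left; apply/eqP; field.
have dQ a : `|Q s a - QS s a| <= d by exact: (le_supnorm (Qsub Q QS) s a).
have f4 : (1 - eps) * (\sum_a sm s a * Q s a - d) <= (1 - eps) * \sum_a sm s a * QS s a.
  apply: ler_wpM2l; first by rewrite subr_ge0.
  rewrite -[X in _ - X]mul1r -(sm_sum s) mulr_suml -sumrB.
  apply: ler_sum => a _; rewrite -mulrBr ler_wpM2l //.
  by move: (dQ a); rewrite ler_norml => /andP[]; lra.
have f1 : (1 - eps) * QS s a' <= (1 - eps) * (Q s a' + d).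
  apply: ler_wpM2l; first by rewrite subr_ge0.
  by move: (dQ a'); rewrite ler_norml => /andP[]; lra.
have f2 : eps * QS s a' <= eps * K.
  apply: ler_wpM2l; first exact: ltW.
  by have := Qstar_bound s a'; rewrite ler_norml => /andP[].
have hsm : Q s a' - \sum_a sm s a * Q s a <= tau * L.
  have := softmax_bound (fun a => Q s a / tau) a'; rewrite -/L => h.
  rewrite -(ler_pM2l tau0) mulrBr in h; apply: le_trans h.
  rewrite mulrCA mulfV ?gt_eqF // mulr1 mulr_sumr le_eqVlt; apply/orP; left; apply/eqP.
  congr (_ - _); apply: eq_bigr => a _.
  have tz : tau != 0 by rewrite gt_eqF.
  have zz : \sum_b expR (Q s b / tau) != 0 by rewrite gt_eqF ?Zpos.
  rewrite /sm; field.
  by apply/andP.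
have d0 : 0 <= d by exact: supnorm_ge0.
have f5 : (1 - eps) * (Q s a' - \sum_a sm s a * Q s a + 2 * d) <= tau * L + 2 * d.
  apply: le_trans (_ : (1 - eps) * (tau * L + 2 * d) <= _).
    by apply: ler_wpM2l; [rewrite subr_ge0 | lra].
  rewrite ler_piMl //; last by lra.
  apply: addr_ge0; last by rewrite mulr_ge0.
  by apply: mulr_ge0 => //; exact: ltW.
rewrite /M; nra.
Qed.


Let spol := soft_pol.

Lemma e_pt s a : `|Qpi p rew gamma pi s a - QS s a| <= e.
Proof. exact: (le_supnorm (Qsub (Qpi p rew gamma pi) QS) s a). Qed.

Lemma step_bound (pi' : S -> A -> R) s a : is_policy pi' ->
  Qpi p rew gamma pi' s a - Qpi p rew gamma pi s a <= gamma * (M + e).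
Proof.
move=> pp.
rewrite (bellman p rew gamma pi' pk pp rew1 g01) (bellman p rew gamma pi pk spol rew1 g01).
rewrite !pairE opprD addrACA subrr add0r -mulrBr ler_wpM2l // -sumrB.
rewrite -[leRHS]mul1r -(pk.2 s a) mulr_suml; apply: ler_sum => s' _.
rewrite -mulrBr; apply: ler_wpM2l; first exact: pk.1.
set V := \sum_a0 pi s' a0 * QS s' a0.
have h1 : \sum_a' pi' s' a' * Qpi p rew gamma pi' s' a' <= V + M.
  rewrite -[V + M]mul1r -(pp.2 s') mulr_suml; apply: ler_sum => a' _.
  apply: ler_wpM2l; first exact: pp.1.
  apply: le_trans (Qstar_ge pi' s' a' pp) _.
  by have := M_bound s' a'; rewrite -/V /QS; lra.
have h2 : V - e <= \sum_a pi s' a * Qpi p rew gamma pi s' a.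
  rewrite /V -[e]mul1r -(spol.2 s') mulr_suml -sumrB; apply: ler_sum => b _.
  rewrite -mulrBr; apply: ler_wpM2l; first exact: spol.1.
  by have := e_pt s' b; rewrite ler_norml => /andP[]; lra.

lra.
Qed.

Lemma e_bound : e <= gamma * (M + e).
Proof.
have e0 : 0 <= e by exact: supnorm_ge0.
apply: supnorm_le; first by rewrite mulr_ge0 // addr_ge0.
move=> s a; rewrite /Qsub.
have hge := Qstar_ge pi s a spol.
rewrite ler0_norm ?subr_le0 //.
have : QS s a <= Qpi p rew gamma pi s a + gamma * (M + e).
  apply: Qstar_le => pi' pp.
  by have := step_bound pi' s a pp; lra.
lra.
Qed.

Lemma pointwise :
  supnorm (Qsub (Qpi p rew gamma pi) QS) ^+ 2
  <= 12 * gamma ^+ 2 / (1 - gamma) ^+ 2 * supnorm (Qsub Q QS) ^+ 2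
     + 12 * eps ^+ 2 / (1 - gamma) ^+ 4
     + 3 * tau ^+ 2 * L ^+ 2 / (1 - gamma) ^+ 2.
Proof.
have e0 : 0 <= e by exact: supnorm_ge0.
have d0 : 0 <= d by exact: supnorm_ge0.
have [e1 e2] : 0 < eps /\ eps <= 1 by case/andP: eps01.
have [g1 g2] : 0 < gamma /\ gamma < 1 by case/andP: g01.
have hK : K * (1 - gamma) = 1.
  by rewrite /K mul1r mulVf // gt_eqF // subr_gt0.
have eb : e <= gamma * K * M.
  have := e_bound => h.
  have : e * (1 - gamma) <= gamma * M by nra.
  move=> h2; rewrite -(ler_pM2r (_ : 0 < 1 - gamma)); last by rewrite subr_gt0.
  have ng : 1 - gamma != 0 by rewrite gt_eqF // subr_gt0.
  suff -> : gamma * K * M * (1 - gamma) = gamma * M by [].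
  by rewrite /K; field.
rewrite -/e -/d.
have -> : 12 * gamma ^+ 2 / (1 - gamma) ^+ 2 = 12 * gamma ^+ 2 * K ^+ 2.
  by rewrite /K expr_div_n expr1n mul1r.
have -> : 12 * eps ^+ 2 / (1 - gamma) ^+ 4 = 12 * eps ^+ 2 * K ^+ 4.
  by rewrite /K expr_div_n expr1n mul1r.
have -> : 3 * tau ^+ 2 * L ^+ 2 / (1 - gamma) ^+ 2 = 3 * tau ^+ 2 * L ^+ 2 * K ^+ 2.
  by rewrite /K expr_div_n expr1n mul1r.
set a1 := gamma * K * (2 * d).
set b1 := gamma * K * (2 * eps * K).
set c1 := gamma * K * (tau * L).
have ea : e <= a1 + b1 + c1.
  suff -> : a1 + b1 + c1 = gamma * K * M by [].
  by rewrite /a1 /b1 /c1 /M; ring.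
have K0l : 0 <= K := ltW K0.
have t0 : 0 <= tau := ltW tau0.
have e0l : 0 <= eps := ltW e1.
have g0l : 0 <= gamma := ltW g1.
have two : 0 <= 2 :> R by [].
have a10 : 0 <= a1 by rewrite /a1; apply: mulr_ge0; apply: mulr_ge0.
have b10 : 0 <= b1 by rewrite /b1; apply: mulr_ge0; apply: mulr_ge0 => //; apply: mulr_ge0.
have c10 : 0 <= c1 by rewrite /c1; apply: mulr_ge0; apply: mulr_ge0.
have sq : e ^+ 2 <= 3 * (a1 ^+ 2 + b1 ^+ 2 + c1 ^+ 2).
  apply: le_trans (_ : (a1 + b1 + c1) ^+ 2 <= _).
    by rewrite ler_pXn2r // ?nnegrE // ?addr_ge0.
  have : 0 <= (a1 - b1) ^+ 2 + (b1 - c1) ^+ 2 + (a1 - c1) ^+ 2.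
    by rewrite !addr_ge0 ?sqr_ge0.
  move=> h; rewrite -subr_ge0; apply: le_trans h _; rewrite le_eqVlt; apply/orP; left; apply/eqP.
  ring.
apply: le_trans sq _.
have gg : gamma ^+ 2 <= 1 by rewrite expr_le1 ?ltW.
have KK : 0 <= K ^+ 2 by exact: sqr_ge0.
have t1 : 3 * a1 ^+ 2 = 12 * gamma ^+ 2 * K ^+ 2 * d ^+ 2 by rewrite /a1; ring.
have t2 : 3 * b1 ^+ 2 = gamma ^+ 2 * (12 * eps ^+ 2 * K ^+ 4) by rewrite /b1; ring.
have t3 : 3 * c1 ^+ 2 = gamma ^+ 2 * (3 * tau ^+ 2 * L ^+ 2 * K ^+ 2) by rewrite /c1; ring.
have u2 : gamma ^+ 2 * (12 * eps ^+ 2 * K ^+ 4) <= 12 * eps ^+ 2 * K ^+ 4.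
  rewrite ler_piMl //; apply: mulr_ge0; [apply: mulr_ge0 => //; exact: sqr_ge0 | exact: exprn_ge0].
have u3 : gamma ^+ 2 * (3 * tau ^+ 2 * L ^+ 2 * K ^+ 2) <= 3 * tau ^+ 2 * L ^+ 2 * K ^+ 2.
  rewrite ler_piMl //; apply: mulr_ge0 => //; apply: mulr_ge0; [apply: mulr_ge0 => //; exact: sqr_ge0 | exact: sqr_ge0].
rewrite !mulrDr t1 t2 t3; lra.
Qed.

End Part4.

Section Part5.
Context {R : realType} {S A : finType}.

Lemma big_tuple_cons (T : finType) k (F : (k.+1).-tuple T -> R) :
  \sum_(h : (k.+1).-tuple T) F h = \sum_(x : T) \sum_(t : k.-tuple T) F (cons_tuple x t).
Proof.
rewrite pair_big /=.
rewrite (reindex (fun xt : T * k.-tuple T => cons_tuple xt.1 xt.2)) //=.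
exists (fun h => (thead h, behead_tuple h)) => [[x t] _ | h _] /=.
  by congr (_, _); apply: val_inj.
by rewrite [RHS]tuple_eta; apply: val_inj.
Qed.

Variables (p : S -> A -> S -> R) (rew : S -> A -> R) (alpha gamma eps tau : R).
Hypothesis pk : is_kernel p.
Hypothesis eps01 : 0 < eps <= 1.

Lemma softpol_ge0 (Q : S -> A -> R) s a : 0 <= softpol eps tau Q s a.
Proof.
have [e0 e1] : 0 < eps /\ eps <= 1 by case/andP: eps01.
rewrite /softpol addr_ge0 //; first by rewrite divr_ge0 // ltW.
have ex (x : R) : 0 <= expR x := ltW (expR_gt0 x).
rewrite mulr_ge0 ?subr_ge0 // divr_ge0 //.
by apply: sumr_ge0 => b _.
Qed.

Lemma softpol_sum_le (Q : S -> A -> R) s : \sum_a softpol eps tau Q s a <= 1.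
Proof.
case: (posnP #|A|) => [/eqP|nA].
  move=> /eqP e; rewrite big1 // => a _; exfalso; by move: (card0_eq e a); rewrite !inE.
by rewrite (soft_pol eps tau Q eps01 nA).2.
Qed.

Lemma run_ge0 (Q : S -> A -> R) s (h : seq (A * S)) :
  0 <= (run p rew alpha gamma eps tau Q s h).2.
Proof.
elim: h Q s => [|[a s'] h IH] Q s /=; first by [].
by rewrite !mulr_ge0 ?softpol_ge0 ?IH //; apply pk.1.
Qed.

Lemma wsum_le k (Q : S -> A -> R) s :
  \sum_(h : k.-tuple (A * S)) (run p rew alpha gamma eps tau Q s h).2 <= 1.
Proof.
elim: k Q s => [|k IH] Q s.
  rewrite (big_pred1 [tuple]) /=; first by [].
  by move=> t; apply/esym/eqP; exact: tuple0.
rewrite big_tuple_cons.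
apply: le_trans (softpol_sum_le Q s).
rewrite (eq_bigr (fun x : A * S => \sum_(t : k.-tuple (A * S)) (run p rew alpha gamma eps tau Q s (cons_tuple (x.1, x.2) t)).2)); last by move=> [a s'] _.
rewrite -(pair_bigA _ (fun a s' => \sum_(t : k.-tuple (A * S)) (run p rew alpha gamma eps tau Q s (cons_tuple (a, s') t)).2)) /=.
apply: ler_sum => a _.
rewrite -[leRHS]mulr1 -(pk.2 s a) mulr_sumr; apply: ler_sum => s' _.
rewrite /= -mulr_sumr -[leRHS]mulr1; apply: ler_wpM2l; last exact: IH.
by rewrite mulr_ge0 ?softpol_ge0 //; apply: pk.1.
Qed.

Lemma Eiter_le k Q0 s0 (f g : (S -> A -> R) -> R) c C :
  0 <= C ->
  (forall Q, f Q <= c * g Q + C) ->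
  Eiter p rew alpha gamma eps tau Q0 s0 k f <= c * Eiter p rew alpha gamma eps tau Q0 s0 k g + C.
Proof.
move=> C0 H; rewrite /Eiter.
apply: le_trans (_ : \sum_(h : k.-tuple (A * S)) (run p rew alpha gamma eps tau Q0 s0 h).2 * (c * g (run p rew alpha gamma eps tau Q0 s0 h).1 + C) <= _).
  by apply: ler_sum => h _; apply: ler_wpM2l; [exact: run_ge0 | exact: H].
under eq_bigr do rewrite mulrDr.
rewrite big_split /= mulr_sumr -mulr_suml lerD //.
  by rewrite le_eqVlt; apply/orP; left; apply/eqP; apply: eq_bigr => h _; rewrite mulrCA.
by rewrite ler_piMl // wsum_le.
Qed.

End Part5.

Theorem theorem2 (R : realType) (S A : finType)
  (p : S -> A -> S -> R) (rew : S -> A -> R) (gamma : R)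
  (alpha eps tau : R) (Q0 : S -> A -> R) (s0 : S)
  (pib : S -> A -> R) (mu : S -> R) (rb : nat) (deltab : R) :
  is_kernel p ->
  (forall s a, `|rew s a| <= 1) ->
  0 < gamma < 1 ->
  supnorm Q0 <= 1 / (1 - gamma) ->
  (* exploration assumption *)
  is_policy pib -> (forall s a, 0 < pib s a) ->
  irreducible (Ppi p pib) ->
  stationary (Ppi p pib) mu ->
  0 < deltab ->
  (forall s s', deltab <= kpow (lazyk (Ppi p pib)) rb s s') ->
  (* step sizes / parameters *)
  0 < alpha -> 0 < eps <= 1 -> 0 < tau <= 1 / (1 - gamma) ->
  forall k : nat,
  (forall h : k.-tuple (A * S),
     0 < (run p rew alpha gamma eps tau Q0 s0 h).2 ->
     alpha < 1 / (1 / 2 * lambda_hist p rew alpha gamma eps tau Q0 s0 h ^+ rb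
                  * (\big[Num.min/mu s0]_(s : S) mu s) * deltab * (1 - gamma))) ->
  Eiter p rew alpha gamma eps tau Q0 s0 k
    (fun Q => supnorm (Qsub (Qpi p rew gamma (softpol eps tau Q)) (Qstar p rew gamma)) ^+ 2)
  <= 12 * gamma ^+ 2 / (1 - gamma) ^+ 2
       * Eiter p rew alpha gamma eps tau Q0 s0 k
           (fun Q => supnorm (Qsub Q (Qstar p rew gamma)) ^+ 2)
     + 12 * eps ^+ 2 / (1 - gamma) ^+ 4
     + 3 * tau ^+ 2 * (ln (#|A|%:R : R)) ^+ 2 / (1 - gamma) ^+ 2.
Proof.
Proof.
move=> pk rew1 g01 Q0b pibpol pibpos irr stat db0 dbH alpha0 eps01 tau01 k _.
have tau0 : 0 < tau by case/andP: tau01.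
have [g1 g2] : 0 < gamma /\ gamma < 1 by case/andP: g01.
have omg : 0 < 1 - gamma by rewrite subr_gt0.
have C0 : 0 <= 12 * eps ^+ 2 / (1 - gamma) ^+ 4
     + 3 * tau ^+ 2 * (ln (#|A|%:R : R)) ^+ 2 / (1 - gamma) ^+ 2.
  apply: addr_ge0; apply: divr_ge0.
  - by apply: mulr_ge0 => //; exact: sqr_ge0.
  - exact: exprn_ge0 (ltW omg).
  - by apply: mulr_ge0; [apply: mulr_ge0 => //; exact: sqr_ge0 | exact: sqr_ge0].
  - exact: exprn_ge0 (ltW omg).
rewrite -addrA; apply: Eiter_le => // Q.
case: (posnP #|A|) => [A0|nA].
  have z (X : S -> A -> R) : supnorm X = 0.
    apply/eqP; rewrite eq_le supnorm_ge0 andbT; apply: supnorm_le => // s a.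
    by exfalso; move: (card0_eq A0 a); rewrite !inE.
  rewrite z expr0n /= addr_ge0 // mulr_ge0 ?sqr_ge0 //.
  apply: divr_ge0; [apply: mulr_ge0 => //; exact: sqr_ge0 | exact: exprn_ge0 (ltW omg)].
rewrite addrA.
exact: (pointwise p rew gamma pk rew1 g01 (ex_intro _ pib pibpol) eps tau Q eps01 tau0 nA).
Qed.
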